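(* With $\mathcal I_1,\dots,\mathcal I_6$ as defined in the context, the following hold: (i) $\mathcal I_2\mathcal I_3^2-4\mathcal I_4\mathcal I_5-\mathcal I_6^2=0$ identically on $\mathfrak{sl}(3,\mathbb C)$; (ii) $\mathcal I_1,\dots,\mathcal I_5$ are algebraically independent, and this relation generates the ideal of all polynomial relations among $\mathcal I_1,\dots,\mathcal I_6$; (iii) the algebra $R=\mathbb C[\mathcal I_1,\dots,\mathcal I_6]$ decomposes as a direct sum of graded vector spaces $R=\mathbb C[\mathcal I_1,\dots,\mathcal I_5]\oplus\mathcal I_6\,\mathbb C[\mathcal I_1,\dots,\mathcal I_5]$ (a Hironaka decomposition with primary invariants $\mathcal I_1,\dots,\mathcal I_5$ and secondary invariants $1,\mathcal I_6$); (iv) the Hilbert series of $R$ (graded by polynomial degree) is $$H(R,q)=\frac{1+q^3}{(1-q)(1-q^2)^2(1-q^3)^2}.$$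
   Context: For $M=(m_{ij})\in\mathfrak{sl}(3,\mathbb C)$ (traceless $3\times3$ complex matrices) define the linear coordinate functions $x_1=m_{12}$, $y_1=m_{21}$, $x_2=m_{23}$, $y_2=m_{32}$, $x_3=m_{13}$, $y_3=m_{31}$, $h_1=m_{11}-m_{22}$, $h_0=\tfrac12(m_{11}+m_{22})-m_{33}$. Define the polynomials $\mathcal I_1=h_0$, $\mathcal I_2=h_1^2+4x_1y_1$, $\mathcal I_3=x_2y_2+x_3y_3$, $\mathcal I_4=h_1y_2y_3+y_1y_2^2-x_1y_3^2$, $\mathcal I_5=h_1x_2x_3+x_1x_2^2-x_3^2y_1$, $\mathcal I_6=h_1(x_2y_2-x_3y_3)-2(y_1y_2x_3+x_1x_2y_3)$. *)

(* Defs.v *)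
(* C : numClosedFieldType stands for the complex numbers. *)
From HB Require Import structures.
From mathcomp Require Import all_boot all_order all_algebra.
Set Implicit Arguments. Unset Strict Implicit. Unset Printing Implicit Defensive.
Import Order.TTheory GRing.Theory Num.Theory.
Local Open Scope ring_scope.

(* Multivariate polynomials as iterated univariate polynomials.
   P5 C = C[y1][y2][y3][y4][y5],  P6 C = (P5 C)[y6]. *)
Notation P5 C := {poly {poly {poly {poly {poly C}}}}}.
Notation P6 C := {poly {poly {poly {poly {poly {poly C}}}}}}.

Definition ev5 (C : numClosedFieldType) (p : P5 C) (a1 a2 a3 a4 a5 : C) : C :=
  ((((p.[a5%:P%:P%:P%:P]).[a4%:P%:P%:P]).[a3%:P%:P]).[a2%:P]).[a1].

Definition ev6 (C : numClosedFieldType) (p : P6 C) (a1 a2 a3 a4 a5 a6 : C) : C :=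
  ev5 (p.[a6%:P%:P%:P%:P%:P]) a1 a2 a3 a4 a5.

Definition Y1 (C : numClosedFieldType) : P6 C := ('X : {poly C})%:P%:P%:P%:P%:P.
Definition Y2 (C : numClosedFieldType) : P6 C := ('X : {poly {poly C}})%:P%:P%:P%:P.
Definition Y3 (C : numClosedFieldType) : P6 C := ('X : {poly {poly {poly C}}})%:P%:P%:P.
Definition Y4 (C : numClosedFieldType) : P6 C := ('X : {poly {poly {poly {poly C}}}})%:P%:P.
Definition Y5 (C : numClosedFieldType) : P6 C := ('X : P5 C)%:P.
Definition Y6 (C : numClosedFieldType) : P6 C := 'X.

Definition Rel (C : numClosedFieldType) : P6 C :=
  Y2 C * Y3 C ^+ 2 - 4%:R * Y4 C * Y5 C - Y6 C ^+ 2.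

Definition i0 : 'I_3 := @Ordinal 3 0 isT.
Definition i1 : 'I_3 := @Ordinal 3 1 isT.
Definition i2 : 'I_3 := @Ordinal 3 2 isT.

Section Coords.
Variable C : numClosedFieldType.
Implicit Types M : 'M[C]_3.
Definition cx1 M := M i0 i1.
Definition cy1 M := M i1 i0.
Definition cx2 M := M i1 i2.
Definition cy2 M := M i2 i1.
Definition cx3 M := M i0 i2.
Definition cy3 M := M i2 i0.
Definition ch1 M := M i0 i0 - M i1 i1.
Definition ch0 M := (M i0 i0 + M i1 i1) / 2%:R - M i2 i2.

Definition I1 M := ch0 M.
Definition I2 M := ch1 M ^+ 2 + 4%:R * cx1 M * cy1 M.
Definition I3 M := cx2 M * cy2 M + cx3 M * cy3 M.
Definition I4 M := ch1 M * cy2 M * cy3 M + cy1 M * cy2 M ^+ 2 - cx1 M * cy3 M ^+ 2.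
Definition I5 M := ch1 M * cx2 M * cx3 M + cx1 M * cx2 M ^+ 2 - cx3 M ^+ 2 * cy1 M.
Definition I6 M := ch1 M * (cx2 M * cy2 M - cx3 M * cy3 M)
                   - 2%:R * (cy1 M * cy2 M * cx3 M + cx1 M * cx2 M * cy3 M).

Definition evI5 (p : P5 C) M := ev5 p (I1 M) (I2 M) (I3 M) (I4 M) (I5 M).
Definition evI6 (p : P6 C) M := ev6 p (I1 M) (I2 M) (I3 M) (I4 M) (I5 M) (I6 M).

Definition inR (g : 'M[C]_3 -> C) :=
  exists p : P6 C, forall M, \tr M = 0 -> g M = evI6 p M.

(* g belongs to the degree-d homogeneous component R_d of R *)
Definition inRd (d : nat) (g : 'M[C]_3 -> C) :=
  inR g /\ forall (t : C) M, \tr M = 0 -> g (t *: M) = t ^+ d * g M.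

Definition lin_indep (k : nat) (f : 'I_k -> 'M[C]_3 -> C) :=
  forall c : 'I_k -> C,
    (forall M, \tr M = 0 -> \sum_(i < k) c i * f i M = 0) -> forall i, c i = 0.

(* dim_C R_d = r *)
Definition dimRd (d r : nat) :=
  (exists f : 'I_r -> 'M[C]_3 -> C, (forall i, inRd d (f i)) /\ lin_indep f) /\
  (forall f : 'I_r.+1 -> 'M[C]_3 -> C, (forall i, inRd d (f i)) -> ~ lin_indep f).
End Coords.

Definition HilbNum : {poly int} := 1 + 'X^3.
Definition HilbDen : {poly int} :=
  (1 - 'X) * (1 - 'X^2) ^+ 2 * (1 - 'X^3) ^+ 2.

(* Main.v *)
Require Import Defs.
From HB Require Import structures.
From mathcomp Require Import all_boot all_order all_algebra.
From mathcomp Require Import ring.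
Import Order.TTheory GRing.Theory Num.Theory.
Local Open Scope ring_scope.
Set Implicit Arguments. Unset Strict Implicit.

Section Q.
Variable C : numClosedFieldType.
Definition Q1 := {poly C}.
HB.instance Definition _ := GRing.IntegralDomain.copy Q1 {poly C}.
Definition Q2 := {poly Q1}.
HB.instance Definition _ := GRing.IntegralDomain.copy Q2 {poly Q1}.
Definition Q3 := {poly Q2}.
HB.instance Definition _ := GRing.IntegralDomain.copy Q3 {poly Q2}.
Definition Q4 := {poly Q3}.
HB.instance Definition _ := GRing.IntegralDomain.copy Q4 {poly Q3}.
Definition Q5 := {poly Q4}.
HB.instance Definition _ := GRing.IntegralDomain.copy Q5 {poly Q4}.
Definition Q6 := {poly Q5}.
HB.instance Definition _ := GRing.IntegralDomain.copy Q6 {poly Q5}.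

Definition l1 (a : C) : Q1 := a%:P.
Definition l2 (a : C) : Q2 := (l1 a)%:P.
Definition l3 (a : C) : Q3 := (l2 a)%:P.
Definition l4 (a : C) : Q4 := (l3 a)%:P.
Definition l5 (a : C) : Q5 := (l4 a)%:P.

Definition qe1 (p : Q1) a1 := p.[a1].
Definition qe2 (p : Q2) a1 a2 := qe1 (p.[l1 a2]) a1.
Definition qe3 (p : Q3) a1 a2 a3 := qe2 (p.[l2 a3]) a1 a2.
Definition qe4 (p : Q4) a1 a2 a3 a4 := qe3 (p.[l3 a4]) a1 a2 a3.
Definition qe5 (p : Q5) a1 a2 a3 a4 a5 := qe4 (p.[l4 a5]) a1 a2 a3 a4.
Definition qe6 (p : Q6) a1 a2 a3 a4 a5 a6 := qe5 (p.[l5 a6]) a1 a2 a3 a4 a5.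

Lemma qe1D p q a1 : qe1 (p + q) a1 = qe1 p a1 + qe1 q a1.
Proof. by rewrite /qe1 hornerD. Qed.
Lemma qe1M p q a1 : qe1 (p * q) a1 = qe1 p a1 * qe1 q a1.
Proof. by rewrite /qe1 hornerM. Qed.
Lemma qe1l a a1 : qe1 (l1 a) a1 = a.
Proof. by rewrite /qe1 /l1 hornerC. Qed.
Lemma qe1N p a1 : qe1 (- p) a1 = - qe1 p a1.
Proof. by rewrite /qe1 hornerN. Qed.
Lemma qe10 a1 : qe1 0 a1 = 0.
Proof. by rewrite /qe1 horner0. Qed.

Lemma qe2D p q a1 a2 : qe2 (p + q) a1 a2 = qe2 p a1 a2 + qe2 q a1 a2.
Proof. by rewrite /qe2 hornerD qe1D. Qed.
Lemma qe2M p q a1 a2 : qe2 (p * q) a1 a2 = qe2 p a1 a2 * qe2 q a1 a2.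
Proof. by rewrite /qe2 hornerM qe1M. Qed.
Lemma qe2N p a1 a2 : qe2 (- p) a1 a2 = - qe2 p a1 a2.
Proof. by rewrite /qe2 hornerN qe1N. Qed.
Lemma qe2C c a1 a2 : qe2 c%:P a1 a2 = qe1 c a1.
Proof. by rewrite /qe2 hornerC. Qed.
Lemma qe2l a a1 a2 : qe2 (l2 a) a1 a2 = a.
Proof. by rewrite /l2 qe2C qe1l. Qed.
Lemma qe20 a1 a2 : qe2 0 a1 a2 = 0.
Proof. by rewrite /qe2 horner0 qe10. Qed.

Lemma qe3D p q a1 a2 a3 : qe3 (p + q) a1 a2 a3 = qe3 p a1 a2 a3 + qe3 q a1 a2 a3.
Proof. by rewrite /qe3 hornerD qe2D. Qed.
Lemma qe3M p q a1 a2 a3 : qe3 (p * q) a1 a2 a3 = qe3 p a1 a2 a3 * qe3 q a1 a2 a3.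
Proof. by rewrite /qe3 hornerM qe2M. Qed.
Lemma qe3N p a1 a2 a3 : qe3 (- p) a1 a2 a3 = - qe3 p a1 a2 a3.
Proof. by rewrite /qe3 hornerN qe2N. Qed.
Lemma qe3C c a1 a2 a3 : qe3 c%:P a1 a2 a3 = qe2 c a1 a2.
Proof. by rewrite /qe3 hornerC. Qed.
Lemma qe3l a a1 a2 a3 : qe3 (l3 a) a1 a2 a3 = a.
Proof. by rewrite /l3 qe3C qe2l. Qed.
Lemma qe30 a1 a2 a3 : qe3 0 a1 a2 a3 = 0.
Proof. by rewrite /qe3 horner0 qe20. Qed.

Lemma qe4D p q a1 a2 a3 a4 : qe4 (p + q) a1 a2 a3 a4 = qe4 p a1 a2 a3 a4 + qe4 q a1 a2 a3 a4.
Proof. by rewrite /qe4 hornerD qe3D. Qed.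
Lemma qe4M p q a1 a2 a3 a4 : qe4 (p * q) a1 a2 a3 a4 = qe4 p a1 a2 a3 a4 * qe4 q a1 a2 a3 a4.
Proof. by rewrite /qe4 hornerM qe3M. Qed.
Lemma qe4N p a1 a2 a3 a4 : qe4 (- p) a1 a2 a3 a4 = - qe4 p a1 a2 a3 a4.
Proof. by rewrite /qe4 hornerN qe3N. Qed.
Lemma qe4C c a1 a2 a3 a4 : qe4 c%:P a1 a2 a3 a4 = qe3 c a1 a2 a3.
Proof. by rewrite /qe4 hornerC. Qed.
Lemma qe4l a a1 a2 a3 a4 : qe4 (l4 a) a1 a2 a3 a4 = a.
Proof. by rewrite /l4 qe4C qe3l. Qed.
Lemma qe40 a1 a2 a3 a4 : qe4 0 a1 a2 a3 a4 = 0.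
Proof. by rewrite /qe4 horner0 qe30. Qed.

Lemma qe5D p q a1 a2 a3 a4 a5 : qe5 (p + q) a1 a2 a3 a4 a5 = qe5 p a1 a2 a3 a4 a5 + qe5 q a1 a2 a3 a4 a5.
Proof. by rewrite /qe5 hornerD qe4D. Qed.
Lemma qe5M p q a1 a2 a3 a4 a5 : qe5 (p * q) a1 a2 a3 a4 a5 = qe5 p a1 a2 a3 a4 a5 * qe5 q a1 a2 a3 a4 a5.
Proof. by rewrite /qe5 hornerM qe4M. Qed.
Lemma qe5N p a1 a2 a3 a4 a5 : qe5 (- p) a1 a2 a3 a4 a5 = - qe5 p a1 a2 a3 a4 a5.
Proof. by rewrite /qe5 hornerN qe4N. Qed.
Lemma qe5C c a1 a2 a3 a4 a5 : qe5 c%:P a1 a2 a3 a4 a5 = qe4 c a1 a2 a3 a4.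
Proof. by rewrite /qe5 hornerC. Qed.
Lemma qe5l a a1 a2 a3 a4 a5 : qe5 (l5 a) a1 a2 a3 a4 a5 = a.
Proof. by rewrite /l5 qe5C qe4l. Qed.
Lemma qe50 a1 a2 a3 a4 a5 : qe5 0 a1 a2 a3 a4 a5 = 0.
Proof. by rewrite /qe5 horner0 qe40. Qed.
Lemma qe51 a1 a2 a3 a4 a5 : qe5 1 a1 a2 a3 a4 a5 = 1.
Proof. by rewrite /qe5 /qe4 /qe3 /qe2 /qe1 !hornerC. Qed.
Lemma qe5X p n a1 a2 a3 a4 a5 : qe5 (p ^+ n) a1 a2 a3 a4 a5 = qe5 p a1 a2 a3 a4 a5 ^+ n.
Proof. by elim: n => [|n IH]; rewrite ?expr0 ?qe51 // !exprS qe5M IH. Qed.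
Lemma qe5n n a1 a2 a3 a4 a5 : qe5 (n%:R) a1 a2 a3 a4 a5 = n%:R.
Proof. by elim: n => [|n IH]; rewrite ?qe50 // !mulrSr qe5D IH qe51. Qed.
Lemma qe5_sum I (r : seq I) (F : I -> Q5) a1 a2 a3 a4 a5 :
  qe5 (\sum_(i <- r) F i) a1 a2 a3 a4 a5 = \sum_(i <- r) qe5 (F i) a1 a2 a3 a4 a5.
Proof.
elim: r => [|x r IH]; first by rewrite !big_nil qe50.
by rewrite !big_cons qe5D IH.
Qed.

Definition y1 : Q5 := ((('X : Q1)%:P : Q2)%:P : Q3)%:P%:P.
Definition y2 : Q5 := ((('X : Q2)%:P : Q3)%:P : Q4)%:P.
Definition y3 : Q5 := (('X : Q3)%:P : Q4)%:P.
Definition y4 : Q5 := ('X : Q4)%:P.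
Definition y5 : Q5 := 'X.
Lemma qe5y1 a1 a2 a3 a4 a5 : qe5 y1 a1 a2 a3 a4 a5 = a1.
Proof. by rewrite /y1 qe5C qe4C qe3C qe2C /qe1 hornerX. Qed.
Lemma qe5y2 a1 a2 a3 a4 a5 : qe5 y2 a1 a2 a3 a4 a5 = a2.
Proof. by rewrite /y2 qe5C qe4C qe3C /qe2 hornerX qe1l. Qed.
Lemma qe5y3 a1 a2 a3 a4 a5 : qe5 y3 a1 a2 a3 a4 a5 = a3.
Proof. by rewrite /y3 qe5C qe4C /qe3 hornerX qe2l. Qed.
Lemma qe5y4 a1 a2 a3 a4 a5 : qe5 y4 a1 a2 a3 a4 a5 = a4.
Proof. by rewrite /y4 qe5C /qe4 hornerX qe3l. Qed.
Lemma qe5y5 a1 a2 a3 a4 a5 : qe5 y5 a1 a2 a3 a4 a5 = a5.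
Proof. by rewrite /y5 /qe5 hornerX qe4l. Qed.

Lemma natrC_inj : injective (fun i : nat => (i%:R : C)).
Proof. by move=> i j /eqP; rewrite eqr_nat => /eqP. Qed.

Lemma pz (S : idomainType) (f : C -> S) : injective f ->
  forall q : {poly S}, (forall c, q.[f c] = 0) -> q = 0.
Proof.
move=> finj q hq; apply/eqP/negPn/negP => qn0.
suff: (size [seq f (i%:R) | i <- iota 0 (size q)] < size q)%N.
  by rewrite size_map size_iota ltnn.
apply: max_poly_roots qn0 _ _.
  by apply/allP => x /mapP [i _ ->]; rewrite /root hq.
rewrite map_inj_uniq ?iota_uniq // => i j /finj; exact: natrC_inj.
Qed.

Lemma pz1 (p : Q1) : (forall a1, qe1 p a1 = 0) -> p = 0.
Proof. by move=> h; apply: (@pz _ id) => // c; apply: h. Qed.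
Lemma pz2 (p : Q2) : (forall a1 a2, qe2 p a1 a2 = 0) -> p = 0.
Proof.
move=> h; apply: (@pz _ l1); first exact: polyC_inj.
by move=> c; apply: pz1 => a1; apply: h.
Qed.
Lemma pz3 (p : Q3) : (forall a1 a2 a3, qe3 p a1 a2 a3 = 0) -> p = 0.
Proof.
move=> h; apply: (@pz _ l2); first by move=> x y /polyC_inj /polyC_inj.
by move=> c; apply: pz2 => a1 a2; apply: h.
Qed.
Lemma pz4 (p : Q4) : (forall a1 a2 a3 a4, qe4 p a1 a2 a3 a4 = 0) -> p = 0.
Proof.
move=> h; apply: (@pz _ l3); first by move=> x y /polyC_inj /polyC_inj /polyC_inj.
by move=> c; apply: pz3 => a1 a2 a3; apply: h.
Qed.
Lemma pz5 (p : Q5) : (forall a1 a2 a3 a4 a5, qe5 p a1 a2 a3 a4 a5 = 0) -> p = 0.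
Proof.
move=> h; apply: (@pz _ l4).
  by move=> x y /polyC_inj /polyC_inj /polyC_inj /polyC_inj.
by move=> c; apply: pz4 => a1 a2 a3 a4; apply: h.
Qed.

Lemma y4_neq0 : y4 != 0.
Proof. by rewrite /y4 polyC_eq0 polyX_eq0. Qed.
End Q.
Section M.
Variable C : numClosedFieldType.
Definition mk (m11 m12 m13 m21 m22 m23 m31 m32 m33 : C) : 'M[C]_3 :=
  \matrix_(i < 3, j < 3)
    nth 0 (nth [::] [:: [:: m11; m12; m13]; [:: m21; m22; m23]; [:: m31; m32; m33]] i) j.
Lemma tr_mk m11 m12 m13 m21 m22 m23 m31 m32 m33 :
  \tr (mk m11 m12 m13 m21 m22 m23 m31 m32 m33) = m11 + m22 + m33.
Proof. by rewrite /mxtrace !big_ord_recr big_ord0 !mxE /= add0r. Qed.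
Definition sig (M : 'M[C]_3) : 'M[C]_3 :=
  mk (M i1 i1) (M i0 i1) (- M i0 i2) (M i1 i0) (M i0 i0) (M i1 i2)
     (- M i2 i0) (M i2 i1) (M i2 i2).
Lemma tr_sig M : \tr (sig M) = \tr M.
Proof.
rewrite tr_mk /mxtrace !big_ord_recr big_ord0 /= add0r.
have -> : (widen_ord (leqnSn 2) (widen_ord (leqnSn 1) ord_max)) = i0 by apply: val_inj.
have -> : (widen_ord (leqnSn 2) ord_max) = i1 by apply: val_inj.
have -> : (@ord_max 2) = i2 by apply: val_inj.
by rewrite (addrC (M i1 i1)).
Qed.
Lemma sigI1 M : I1 (sig M) = I1 M.
Proof. rewrite /I1 /ch0 !mxE /=. ring. Qed.
Lemma sigI2 M : I2 (sig M) = I2 M.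
Proof. rewrite /I2 /ch1 /cx1 /cy1 !mxE /=. ring. Qed.
Lemma sigI3 M : I3 (sig M) = I3 M.
Proof. rewrite /I3 /cx2 /cy2 /cx3 /cy3 !mxE /=. ring. Qed.
Lemma sigI4 M : I4 (sig M) = I4 M.
Proof. rewrite /I4 /ch1 /cx1 /cy1 /cx2 /cy2 /cx3 /cy3 !mxE /=. ring. Qed.
Lemma sigI5 M : I5 (sig M) = I5 M.
Proof. rewrite /I5 /ch1 /cx1 /cy1 /cx2 /cy2 /cx3 /cy3 !mxE /=. ring. Qed.
Lemma sigI6 M : I6 (sig M) = - I6 M.
Proof. rewrite /I6 /ch1 /cx1 /cy1 /cx2 /cy2 /cx3 /cy3 !mxE /=. ring. Qed.

Lemma natC_neq0 n : (n.+1%:R : C) != 0.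
Proof. by rewrite pnatr_eq0. Qed.

Definition param (a1 a2 a3 a4 a5 : C) : 'M[C]_3 :=
  let x1 := a2 / (4%:R * a4) in
  let r := sqrtC ((x1 * a3 ^+ 2 - a5) / a4) in
  mk (a1 / 3%:R) x1 r a4 (a1 / 3%:R) a3 0 1 (- (2%:R * a1 / 3%:R)).

Lemma param_tr a1 a2 a3 a4 a5 : \tr (param a1 a2 a3 a4 a5) = 0.
Proof.
rewrite /param tr_mk. have := natC_neq0 2. move=> h3. field. done.
Qed.
Lemma param_I a1 a2 a3 a4 a5 : a4 != 0 ->
  let M := param a1 a2 a3 a4 a5 in
  [/\ I1 M = a1, I2 M = a2, I3 M = a3, I4 M = a4 & I5 M = a5].
Proof.
move=> a4n0 /=; have h3 := natC_neq0 2; have h2 := natC_neq0 1; have h4 := natC_neq0 3.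
rewrite /I1 /I2 /I3 /I4 /I5 /ch0 /ch1 /cx1 /cy1 /cx2 /cy2 /cx3 /cy3 !mxE /=.
split.
- by field.
- by field.
- by ring.
- by ring.
- rewrite sqrtCK. by field.
Qed.
End M.

Section Main.
Variable C : numClosedFieldType.
Implicit Types M : 'M[C]_3.
Local Notation Q5 := (Q5 C).
Local Notation Q6 := (Q6 C).

Definition eI5 (p : Q5) M := qe5 p (I1 M) (I2 M) (I3 M) (I4 M) (I5 M).
Definition eI6 (p : Q6) M := qe6 p (I1 M) (I2 M) (I3 M) (I4 M) (I5 M) (I6 M).

Lemma syz M : I2 M * I3 M ^+ 2 - 4%:R * I4 M * I5 M - I6 M ^+ 2 = 0.
Proof. rewrite /I2 /I3 /I4 /I5 /I6. ring. Qed.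

Lemma gmulf (R : idomainType) (p y : R) : y != 0 -> p * y = 0 -> p = 0.
Proof. by move=> yn /eqP; rewrite mulf_eq0 (negPf yn) orbF => /eqP. Qed.

Lemma indep (p : Q5) : (forall M, \tr M = 0 -> eI5 p M = 0) -> p = 0.
Proof.
move=> h; apply: (gmulf (y4_neq0 C)).
apply: pz5 => a1 a2 a3 a4 a5; rewrite qe5M qe5y4.
have [->|a4n0] := eqVneq a4 0; first by rewrite mulr0.
have [e1 e2 e3 e4 e5] := param_I a1 a2 a3 a5 a4n0.
by have := h _ (param_tr a1 a2 a3 a4 a5); rewrite /eI5 e1 e2 e3 e4 e5 => ->; rewrite mul0r.
Qed.

Lemma eI5_sig (p : Q5) M : eI5 p (sig M) = eI5 p M.
Proof. by rewrite /eI5 sigI1 sigI2 sigI3 sigI4 sigI5. Qed.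

Lemma split_unique (a b : Q5) :
  (forall M, \tr M = 0 -> eI5 a M + I6 M * eI5 b M = 0) ->
  (forall M, \tr M = 0 -> eI5 a M = 0) /\
  (forall M, \tr M = 0 -> I6 M * eI5 b M = 0).
Proof.
move=> h.
have ha : forall M, \tr M = 0 -> eI5 a M = 0.
  move=> M tM; have h1 := h M tM.
  have := h (sig M); rewrite tr_sig => /(_ tM); rewrite !eI5_sig sigI6 => h2.
  have : (2%:R : C) * eI5 a M = 0.
    by rewrite -[RHS](addr0 0) -{1}h1 -{1}h2; ring.
  by move/eqP; rewrite mulf_eq0 pnatr_eq0 /= => /eqP.
split=> // M tM; have := h M tM; rewrite ha // add0r //.
Qed.

Definition cc : Q5 := y2 C * y3 C ^+ 2 - 4%:R * y4 C * y5 C.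
Lemma qe5cc a1 a2 a3 a4 a5 : qe5 cc a1 a2 a3 a4 a5 = a2 * a3 ^+ 2 - 4%:R * a4 * a5.
Proof.
by rewrite /cc !(qe5D, qe5M, qe5N, qe5X, qe5y2, qe5y3, qe5y4, qe5y5, qe5n).
Qed.
Lemma cc_neq0 : cc != 0.
Proof.
apply/negP => /eqP h; have := qe5cc 0 1 1 0 0; rewrite h qe50 => /eqP.
by rewrite expr1n mulr1 !mulr0 subr0 eq_sym oner_eq0.
Qed.

Lemma I6_kill (b : Q5) : (forall M, \tr M = 0 -> I6 M * eI5 b M = 0) -> b = 0.
Proof.
move=> h; apply: (gmulf cc_neq0).
rewrite mulrC; apply: indep => M tM; rewrite /eI5 qe5M qe5cc -/(eI5 b M).
have e : I2 M * I3 M ^+ 2 - 4%:R * I4 M * I5 M = I6 M ^+ 2.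
  by apply/eqP; rewrite -subr_eq0 syz.
by rewrite e expr2 -mulrA h // mulr0.
Qed.

Lemma gen_div (R : comNzRingType) (c : R) (p : {poly R}) :
  exists q (a b : R), p = q * ('X^2 - c%:P) + (a%:P + b%:P * 'X).
Proof.
have mon : 'X^2 - c%:P \is monic by exact: monicXnsubC.
have sz : size ('X^2 - c%:P) = 3%N by rewrite size_XnsubC.
set r := Pdiv.CommonRing.rmodp p ('X^2 - c%:P).
have hr : (size r <= 2)%N.
  have := Pdiv.CommonRing.ltn_rmodpN0 p (q:='X^2 - c%:P).
  by rewrite -size_poly_eq0 sz => /(_ isT).
exists (Pdiv.CommonRing.rdivp p ('X^2 - c%:P)), r`_0, r`_1.
rewrite {1}(Pdiv.RingMonic.rdivp_eq mon p) -/r; congr (_ + _).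
apply/polyP => i; rewrite coefD coefMX !coefC.
case: i => [|[|i]] /=; rewrite ?addr0 ?add0r //.
by rewrite nth_default //; apply: leq_trans hr _.
Qed.

Lemma gen_eval (R : comNzRingType) (c : R) (p : {poly R}) : exists q (a b : R),
  p = q * ('X^2 - c%:P) + (a%:P + b%:P * 'X) /\ forall (phi : R -> C) (io : C -> R) (z : C),
  (forall x y, phi (x + y) = phi x + phi y) ->
  (forall x y, phi (x * y) = phi x * phi y) ->
  (forall x, phi (- x) = - phi x) ->
  (forall x, phi (io x) = x) -> phi c = z ^+ 2 ->
  phi (p.[io z]) = phi a + z * phi b.
Proof.
have [q [a [b ->]]] := gen_div c p.
exists q, a, b; split => // phi io z pD pM pN pio pc.
rewrite !(hornerD, hornerM, hornerN, hornerXn, hornerC, hornerX).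
rewrite !(pD, pM, pN) !pio pc expr2 subrr mulr0 add0r.
by rewrite mulrC.
Qed.

Lemma eI6_split (p : Q6) : exists a b : Q5, forall M, \tr M = 0 ->
  eI6 p M = eI5 a M + I6 M * eI5 b M.
Proof.
have [q [a [b [_ H]]]] := gen_eval cc p; exists a, b => M tM.
rewrite /eI6 /qe6 (H (fun q => qe5 q (I1 M) (I2 M) (I3 M) (I4 M) (I5 M)) (l5 (C:=C))) //.
- by move=> x y; rewrite qe5D.
- by move=> x y; rewrite qe5M.
- by move=> x; rewrite qe5N.
- by move=> x; rewrite qe5l.
- rewrite qe5cc; apply/eqP; rewrite -subr_eq0 syz //.
Qed.

Lemma gen_rel (R : comNzRingType) (u v s t : R) :
  u%:P * v%:P ^+ 2 - 4%:R * s%:P * t%:P - 'X^2 =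
  - ('X^2 - (u * v ^+ 2 - 4%:R * s * t)%:P).
Proof. rewrite !(rmorphB, rmorphM, rmorphXn, rmorph_nat). ring. Qed.

Definition RelQ : Q6 := (y2 C)%:P * (y3 C)%:P ^+ 2 - 4%:R * (y4 C)%:P * (y5 C)%:P - 'X^2.

Lemma RelQ_dd : RelQ = - ('X^2 - cc%:P).
Proof. exact: gen_rel. Qed.

Lemma part_iib (p : Q6) : (forall M, \tr M = 0 -> eI6 p M = 0) ->
  exists q : Q6, p = q * RelQ.
Proof.
move=> h.
have [q [a [b [E H]]]] := gen_eval cc p.
have H' : forall M, \tr M = 0 -> eI6 p M = eI5 a M + I6 M * eI5 b M.
  move=> M tM.
  rewrite /eI6 /qe6 (H (fun q => qe5 q (I1 M) (I2 M) (I3 M) (I4 M) (I5 M)) (l5 (C:=C))) //.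
  - by move=> x y; rewrite qe5D.
  - by move=> x y; rewrite qe5M.
  - by move=> x; rewrite qe5N.
  - by move=> x; rewrite qe5l.
  - rewrite qe5cc; apply/eqP; rewrite -subr_eq0 syz //.
have [h0 h1] := split_unique (a:=a) (b:=b) (fun M tM => etrans (esym (H' M tM)) (h M tM)).
have a0 := indep h0; have b0 := I6_kill h1.
exists (- q); rewrite RelQ_dd mulrNN E a0 b0.
by rewrite !polyC0 mul0r !addr0.
Qed.
End Main.


Require Import Defs.
From HB Require Import structures.
From mathcomp Require Import all_boot all_order all_algebra.
From mathcomp Require Import ring zify.
Import Order.TTheory GRing.Theory Num.Theory.
Local Open Scope ring_scope.
Set Implicit Arguments. Unset Strict Implicit.

Definition E5 := (nat * nat * nat * nat * nat)%type.
Definition E := (E5 * bool)%type.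
Definition w5 (m : E5) : nat := let: (a, b, c, e, f) := m in (a + 2 * b + 2 * c + 3 * e + 3 * f)%N.
Definition w (m : E) : nat := (w5 m.1 + 3 * m.2)%N.

Definition rng N := iota 0 N.+1.
Definition allE (N : nat) : seq E :=
  [seq (x, g) | x <- [seq (x, f) | x <- [seq (x, e) | x <- [seq (x, c) | x <-
     [seq (a, b) | a <- rng N, b <- rng N], c <- rng N], e <- rng N], f <- rng N],
     g <- [:: false; true]].
Definition mons N d := [seq m <- allE N | w m == d].
Definition hh d := size (mons d d).

Lemma uniq_pair (S T : eqType) (s : seq S) (t : seq T) :
  uniq s -> uniq t -> uniq [seq (x, y) | x <- s, y <- t].
Proof. by move=> us ut; apply: allpairs_uniq => // [[a b]] [c d] _ _. Qed.

Lemma uniq_allE N : uniq (allE N).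
Proof. by rewrite /allE !uniq_pair // iota_uniq. Qed.

Lemma mem_allE N (m : E) : (w m <= N)%N -> m \in allE N.
Proof.
case: m => [[[[[a b] c] e] f] g] /=; rewrite /w /w5 /= => hw.
rewrite /allE; apply: allpairs_f; last by case: (g) hw.
do 3 (apply: allpairs_f; last by rewrite mem_iota; lia).
by apply: allpairs_f; rewrite mem_iota; lia.
Qed.

Lemma mem_mons N d m : (d <= N)%N -> (m \in mons N d) = (w m == d).
Proof.
move=> dN; rewrite mem_filter; case: eqP => //= hw.
by apply: mem_allE; rewrite hw.
Qed.

Lemma uniq_mons N d : uniq (mons N d).
Proof. exact/filter_uniq/uniq_allE. Qed.

Lemma size_mons N d : (d <= N)%N -> size (mons N d) = hh d.
Proof.
move=> dN; apply: perm_size; apply: uniq_perm; rewrite ?uniq_mons // => m.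
by rewrite !mem_mons.
Qed.

Definition PN N : {poly int} := \sum_(m <- allE N) 'X^(w m).

Lemma sum_count (T : Type) (s : seq T) (P : pred T) :
  \sum_(x <- s) ((P x)%:R : int) = (count P s)%:R.
Proof.
elim: s => [|x s IH]; first by rewrite big_nil.
by rewrite big_cons IH /= natrD.
Qed.

Lemma coef_PN N i : (PN N)`_i = (size (mons N i))%:R.
Proof.
rewrite /PN coef_sum size_filter -sum_count.
by apply: eq_bigr => m _; rewrite coefXn eq_sym.
Qed.

Definition geo (k N : nat) : {poly int} := \sum_(i < N.+1) ('X^k) ^+ i.

Lemma sum_rng N (F : nat -> {poly int}) : \sum_(a <- rng N) F a = \sum_(i < N.+1) F i.
Proof. by rewrite /rng -(big_mkord xpredT) /index_iota subn0. Qed.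

Lemma PN_prod N : PN N =
  geo 1 N * geo 2 N * geo 2 N * geo 3 N * geo 3 N * (1 + 'X^3).
Proof.
rewrite /PN /allE !big_allpairs.
have G : forall k, geo k N = \sum_(a <- rng N) 'X^(k * a).
  by move=> k; rewrite sum_rng; apply: eq_bigr => i _; rewrite exprM.
rewrite -!mulrA !G mulr_suml; apply: eq_bigr => a _.
rewrite mulr_suml mulr_sumr; apply: eq_bigr => b _.
rewrite mulr_suml !mulr_sumr; apply: eq_bigr => c _.
rewrite mulr_suml !mulr_sumr; apply: eq_bigr => e _.
rewrite mulr_suml !mulr_sumr; apply: eq_bigr => f _.
rewrite !big_cons big_nil /w /w5 /= !exprD ?muln0 ?muln1 ?expr0 ?mul1n ?addr0 ?addn0.
ring.
Qed.

Lemma geo_mul k N : geo k N * (1 - 'X^k) = 1 - 'X^(k * N.+1).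
Proof.
rewrite /geo exprM; elim: N => [|N IH]; first by rewrite big_ord1 expr0 mul1r expr1.
rewrite big_ord_recr /= mulrDl IH !exprS. ring.
Qed.

Definition one_mod N (p : {poly int}) := exists q, p = 1 + 'X^(N.+1) * q.

Lemma one_modM N p q : one_mod N p -> one_mod N q -> one_mod N (p * q).
Proof.
move=> [a ->] [b ->]; exists (a + b + 'X^(N.+1) * a * b). ring.
Qed.
Lemma one_modX N k : (N < k)%N -> one_mod N (1 - 'X^k).
Proof.
move=> hk; exists (- 'X^(k - N.+1)); rewrite mulrN -exprD subnKC //.
Qed.

Lemma coef_one_mod N (p q : {poly int}) n : one_mod N q -> (n <= N)%N ->
  (p * q)`_n = p`_n.
Proof.
move=> [r ->] hn; rewrite mulrDr mulr1 coefD mulrCA coefXnM.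
rewrite ltnS hn.
by rewrite addr0.
Qed.

Lemma hilb n : \sum_(i < n.+1) (hh i)%:Z * HilbDen`_(n - i) = HilbNum`_n.
Proof.
have -> : \sum_(i < n.+1) (hh i)%:Z * HilbDen`_(n - i) = (PN n * HilbDen)`_n.
  rewrite coefM; apply: eq_bigr => i _; rewrite coef_PN size_mons //.
  - by rewrite natz.
  - by rewrite -ltnS ltn_ord.
have -> : PN n * HilbDen = HilbNum * ((1 - 'X^(1 * n.+1)) * (1 - 'X^(2 * n.+1)) *
    (1 - 'X^(2 * n.+1)) * (1 - 'X^(3 * n.+1)) * (1 - 'X^(3 * n.+1))).
  rewrite -!geo_mul PN_prod /HilbDen /HilbNum expr1. ring.
apply: (@coef_one_mod n) => //.
by do 4 (apply: one_modM; last (apply: one_modX; lia)); apply: one_modX; lia.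
Qed.

Require Import Defs.
From HB Require Import structures.
From mathcomp Require Import all_boot all_order all_algebra.
From mathcomp Require Import ring.
Import Order.TTheory GRing.Theory Num.Theory.
Local Open Scope ring_scope.
Set Implicit Arguments. Unset Strict Implicit.
Strategy expand [reverse_coercion].

Section Good.
Variable C : numClosedFieldType.
Definition good (R : nzSemiRingType) (phi : R -> C) :=
  [/\ phi 0 = 0, phi 1 = 1, forall x y, phi (x + y) = phi x + phi y &
      forall x y, phi (x * y) = phi x * phi y].
Definition central (R : nzSemiRingType) (z : R) := forall r, z * r = r * z.

Lemma central_polyC (R : nzSemiRingType) (z : R) : central z -> central (z%:P).
Proof.
move=> hz r; apply/polyP => i; rewrite coefCM coefMC; exact: hz.
Qed.

Lemma good_horner (R : nzSemiRingType) (phi : R -> C) (z : R) :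
  good phi -> central z -> good (fun p : {poly R} => phi p.[z]).
Proof.
move=> [h0 h1 hD hM] hz; split.
- by rewrite horner0.
- by rewrite hornerC.
- by move=> x y; rewrite hornerD hD.
- move=> x y; rewrite hornerM_comm ?hM // /comm_poly hz.
Qed.

Lemma good_sum (R : nzSemiRingType) (phi : R -> C) I (r : seq I) (F : I -> R) :
  good phi -> phi (\sum_(i <- r) F i) = \sum_(i <- r) phi (F i).
Proof.
move=> [h0 h1 hD hM]; elim: r => [|x r IH]; first by rewrite !big_nil.
by rewrite !big_cons hD IH.
Qed.

Lemma good_exp (R : nzSemiRingType) (phi : R -> C) (x : R) n :
  good phi -> phi (x ^+ n) = phi x ^+ n.
Proof.
move=> [h0 h1 hD hM]; elim: n => [|n IH]; first by rewrite !expr0.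
by rewrite !exprS hM IH.
Qed.

Lemma good_nat (R : nzSemiRingType) (phi : R -> C) n :
  good phi -> phi n%:R = n%:R.
Proof.
move=> [h0 h1 hD hM]; elim: n => [|n IH]; first by rewrite h0.
by rewrite !mulrS hD h1 IH.
Qed.

Lemma good_id : good (fun x : C => x).
Proof. by []. Qed.
Lemma centralC (a : C) : central a.
Proof. by move=> r; rewrite mulrC. Qed.

Lemma good5 (a1 a2 a3 a4 a5 : C) : good (fun p : P5 C => ev5 p a1 a2 a3 a4 a5).
Proof.
apply: (good_horner (phi := fun p => ((((p.[a4%:P%:P%:P]).[a3%:P%:P]).[a2%:P]).[a1]))).
  apply: (good_horner (phi := fun p => (((p.[a3%:P%:P]).[a2%:P]).[a1]))).
    apply: (good_horner (phi := fun p => ((p.[a2%:P]).[a1]))).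
      apply: (good_horner (phi := fun p => (p.[a1]))).
        exact: good_horner good_id (centralC a1).
      exact/central_polyC/centralC.
    exact/central_polyC/central_polyC/centralC.
  exact/central_polyC/central_polyC/central_polyC/centralC.
exact/central_polyC/central_polyC/central_polyC/central_polyC/centralC.
Qed.

Lemma good6 (a1 a2 a3 a4 a5 a6 : C) : good (fun p : P6 C => ev6 p a1 a2 a3 a4 a5 a6).
Proof.
apply: (good_horner (phi := fun p => ev5 p a1 a2 a3 a4 a5)); first exact: good5.
exact/central_polyC/central_polyC/central_polyC/central_polyC/central_polyC/centralC.
Qed.

Lemma ev5_lift (t a1 a2 a3 a4 a5 : C) : ev5 t%:P%:P%:P%:P%:P a1 a2 a3 a4 a5 = t.
Proof. by rewrite /ev5 !hornerC. Qed.
Lemma ev6C (c : P5 C) a1 a2 a3 a4 a5 a6 : ev6 c%:P a1 a2 a3 a4 a5 a6 = ev5 c a1 a2 a3 a4 a5.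
Proof. by rewrite /ev6 hornerC. Qed.
Lemma ev6X (a1 : C) a2 a3 a4 a5 a6 : ev6 ('X : P6 C) a1 a2 a3 a4 a5 a6 = a6.
Proof. by rewrite /ev6 hornerX ev5_lift. Qed.
End Good.

Section Lvl6.
Variable C : numClosedFieldType.
Implicit Types M : 'M[C]_3.

Lemma br5 (p : P5 C) a1 a2 a3 a4 a5 : ev5 p a1 a2 a3 a4 a5 = qe5 (p : Q5 C) a1 a2 a3 a4 a5.
Proof. exact_no_check (erefl (ev5 p a1 a2 a3 a4 a5)). Qed.

Lemma eqQP (x y : Q5 C) : x = y -> (x : P5 C) = (y : P5 C).
Proof. move=> h; exact_no_check h. Qed.

Lemma eq5 (x y : P5 C) : (forall a1 a2 a3 a4 a5, ev5 x a1 a2 a3 a4 a5 = ev5 y a1 a2 a3 a4 a5) -> x = y.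
Proof.
move=> h; apply: eqQP; apply/eqP; rewrite -subr_eq0; apply/eqP.
apply: pz5 => a1 a2 a3 a4 a5; rewrite qe5D qe5N -!br5 h; exact: subrr.
Qed.

Lemma eq6 (p q : P6 C) :
  (forall a1 a2 a3 a4 a5 a6, ev6 p a1 a2 a3 a4 a5 a6 = ev6 q a1 a2 a3 a4 a5 a6) -> p = q.
Proof.
move=> h; apply/polyP => i; apply: eq5 => a1 a2 a3 a4 a5.
set N := maxn (size p) (size q).
have E : forall r : P6 C, (size r <= N)%N -> forall t,
    ev6 r a1 a2 a3 a4 a5 t = (\poly_(j < N) ev5 r`_j a1 a2 a3 a4 a5).[t].
  move=> r hr t; have [g0 g1 gD gM] := good5 a1 a2 a3 a4 a5.
  rewrite /ev6 (horner_coef_wide _ hr) (good_sum _ _ (good5 a1 a2 a3 a4 a5)).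
  rewrite horner_poly; apply: eq_bigr => j _.
  by rewrite gM (good_exp _ _ (good5 a1 a2 a3 a4 a5)) ev5_lift.
have hp : (size p <= N)%N by rewrite leq_maxl.
have hq : (size q <= N)%N by rewrite leq_maxr.
have e : \poly_(j < N) ev5 p`_j a1 a2 a3 a4 a5 = \poly_(j < N) ev5 q`_j a1 a2 a3 a4 a5.
  apply/eqP; rewrite -subr_eq0; apply/eqP; apply: (@pz C C id) => // t.
  by rewrite hornerD hornerN -E // -E // h subrr.
have [iN|iN] := ltnP i N.
  by have := congr1 (fun r : {poly C} => r`_i) e; rewrite /= !coef_poly iN.
rewrite !nth_default //; exact: leq_trans iN.
Qed.

Lemma zmod3 (V : zmodType) (a b c : V) : c + b + ((a + - b) + - c) = a.
Proof. by rewrite addrC addrA !subrK. Qed.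

Time Lemma RelId : 'X^2 + 4%:R * Y4 C * Y5 C + Rel C = Y2 C * Y3 C ^+ 2.
Proof.
Time exact_no_check (@zmod3 (P6 C) (Y2 C * Y3 C ^+ 2) (4%:R * Y4 C * Y5 C) ('X^2)).
Time Qed.

Definition Rv (a2 a3 a4 a5 a6 : C) := a2 * a3 ^+ 2 - 4%:R * a4 * a5 - a6 ^+ 2.

Lemma ev6Y2 a1 a2 a3 a4 a5 a6 : ev6 (Y2 C) a1 a2 a3 a4 a5 a6 = a2.
Proof. by rewrite /Y2 ev6C /ev5 hornerC hornerC hornerC hornerX hornerC. Qed.
Lemma ev6Y3 a1 a2 a3 a4 a5 a6 : ev6 (Y3 C) a1 a2 a3 a4 a5 a6 = a3.
Proof. by rewrite /Y3 ev6C /ev5 hornerC hornerC hornerX hornerC hornerC. Qed.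
Lemma ev6Y4 a1 a2 a3 a4 a5 a6 : ev6 (Y4 C) a1 a2 a3 a4 a5 a6 = a4.
Proof. by rewrite /Y4 ev6C /ev5 hornerC hornerX hornerC hornerC hornerC. Qed.
Lemma ev6Y5 a1 a2 a3 a4 a5 a6 : ev6 (Y5 C) a1 a2 a3 a4 a5 a6 = a5.
Proof. by rewrite /Y5 ev6C /ev5 hornerX hornerC hornerC hornerC hornerC. Qed.

Lemma evRel_gen (Rr : P6 C) a1 a2 a3 a4 a5 a6 :
  'X^2 + 4%:R * Y4 C * Y5 C + Rr = Y2 C * Y3 C ^+ 2 ->
  ev6 Rr a1 a2 a3 a4 a5 a6 = Rv a2 a3 a4 a5 a6.
Proof.
move=> H; have G := good6 a1 a2 a3 a4 a5 a6; have [g0 g1 gD gM] := G.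
have E1 : ev6 ('X^2 + 4%:R * Y4 C * Y5 C + Rr) a1 a2 a3 a4 a5 a6 =
    ev6 (Y2 C * Y3 C ^+ 2) a1 a2 a3 a4 a5 a6 by rewrite H.
have E2 : ev6 ('X^2 + 4%:R * Y4 C * Y5 C + Rr) a1 a2 a3 a4 a5 a6 =
    a6 ^+ 2 + 4%:R * a4 * a5 + ev6 Rr a1 a2 a3 a4 a5 a6.
  rewrite (gD ('X^2 + 4%:R * Y4 C * Y5 C) Rr) (gD ('X^2) (4%:R * Y4 C * Y5 C)).
  rewrite (gM (4%:R * Y4 C) (Y5 C)) (gM (4%:R) (Y4 C)).
  rewrite (good_exp 'X 2 G) (good_nat 4 G).
  by rewrite (ev6X a1 a2 a3 a4 a5 a6) (ev6Y4 a1 a2 a3 a4 a5 a6) (ev6Y5 a1 a2 a3 a4 a5 a6).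
have E3 : ev6 (Y2 C * Y3 C ^+ 2) a1 a2 a3 a4 a5 a6 = a2 * a3 ^+ 2.
  rewrite (gM (Y2 C) (Y3 C ^+ 2)) (good_exp (Y3 C) 2 G).
  by rewrite (ev6Y2 a1 a2 a3 a4 a5 a6) (ev6Y3 a1 a2 a3 a4 a5 a6).
have E : a6 ^+ 2 + 4%:R * a4 * a5 + ev6 Rr a1 a2 a3 a4 a5 a6 = a2 * a3 ^+ 2.
  by rewrite -E2 E1 E3.
rewrite /Rv -E; ring.
Qed.

Lemma evRel a1 a2 a3 a4 a5 a6 : ev6 (Rel C) a1 a2 a3 a4 a5 a6 = Rv a2 a3 a4 a5 a6.
Proof. exact: evRel_gen RelId. Qed.
End Lvl6.

Require Import Defs.
From HB Require Import structures.
From mathcomp Require Import all_boot all_order all_algebra.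
From mathcomp Require Import ring.
Import Order.TTheory GRing.Theory Num.Theory.
Local Open Scope ring_scope.
Set Implicit Arguments. Unset Strict Implicit.
Strategy expand [reverse_coercion].

Section Red.
Variable C : numClosedFieldType.
Implicit Types M : 'M[C]_3.

Lemma ind6 (K : P6 C -> Prop) : K 0 -> (forall (p : P6 C) (c : P5 C), K p -> K (p * 'X + c%:P)) ->
  forall p, K p.
Proof. move=> h0 hS p; exact_no_check (poly_ind h0 hS p). Qed.

Lemma red (p : P6 C) : exists (q : P6 C) (A B : Q5 C), forall a1 a2 a3 a4 a5 a6,
  ev6 p a1 a2 a3 a4 a5 a6 = ev6 q a1 a2 a3 a4 a5 a6 * Rv a2 a3 a4 a5 a6
     + qe5 A a1 a2 a3 a4 a5 + qe5 B a1 a2 a3 a4 a5 * a6.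
Proof.
elim/ind6: p => [|p c [q [A [B IH]]]].
  exists 0, 0, 0 => a1 a2 a3 a4 a5 a6; have [g0 _ _ _] := good6 a1 a2 a3 a4 a5 a6.
  rewrite g0 !qe50; ring.
exists (q * 'X + ((B * l5 (-1) : Q5 C) : P5 C)%:P), ((c : Q5 C) + B * cc C), A.
move=> a1 a2 a3 a4 a5 a6; have [g0 g1 gD gM] := good6 a1 a2 a3 a4 a5 a6.
Time rewrite (gD (p * 'X) c%:P).
Time rewrite (gM p 'X).
Time rewrite (ev6X a1 a2 a3 a4 a5 a6).
Time rewrite (ev6C c).
Time rewrite IH.
rewrite (gD (q * 'X) _) (gM q 'X) (ev6X a1 a2 a3 a4 a5 a6) ev6C !br5.
rewrite qe5D !qe5M qe5l qe5cc /Rv; ring.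
Qed.

Lemma syzRv M : Rv (I2 M) (I3 M) (I4 M) (I5 M) (I6 M) = 0.
Proof. exact: syz. Qed.

Lemma iiiaP (p : P6 C) : exists a b : P5 C, forall M, \tr M = 0 ->
  evI6 p M = evI5 a M + I6 M * evI5 b M.
Proof.
have [q [A [B H]]] := red p; exists (A : P5 C), (B : P5 C) => M tM.
by rewrite /evI6 H syzRv mulr0 add0r /evI5 !br5 mulrC.
Qed.

Lemma iibP (p : P6 C) : (forall M, \tr M = 0 -> evI6 p M = 0) ->
  exists q : P6 C, p = q * Rel C.
Proof.
move=> h; have [q [A [B H]]] := red p.
have hAB : forall M, \tr M = 0 -> eI5 A M + I6 M * eI5 B M = 0.
  move=> M tM; have := h M tM; rewrite /evI6 H syzRv mulr0 add0r mulrC.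
  by [].
have [hA hB] := split_unique hAB.
have A0 := indep hA; have B0 := I6_kill hB.
exists q; apply: eq6 => a1 a2 a3 a4 a5 a6; have [g0 g1 gD gM] := good6 a1 a2 a3 a4 a5 a6.
by rewrite (gM q (Rel C)) evRel H A0 B0 qe50 mul0r !addr0.
Qed.
End Red.

Require Import Defs.
From HB Require Import structures.
From mathcomp Require Import all_boot all_order all_algebra.
From mathcomp Require Import ring zify.
Import Order.TTheory GRing.Theory Num.Theory.
Local Open Scope ring_scope.
Set Implicit Arguments. Unset Strict Implicit.
Strategy expand [reverse_coercion].

Section Rep.
Variable C : numClosedFieldType.

Definition mono (m : E5) (x1 x2 x3 x4 x5 : C) : C :=
  let: (a, b, c, e, f) := m in x1 ^+ a * x2 ^+ b * x3 ^+ c * x4 ^+ e * x5 ^+ f.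

Definition sh1 (m : E5) : E5 := let: (a, b, c, e, f) := m in (a.+1, b, c, e, f).
Definition sh2 (m : E5) : E5 := let: (a, b, c, e, f) := m in (a, b.+1, c, e, f).
Definition sh3 (m : E5) : E5 := let: (a, b, c, e, f) := m in (a, b, c.+1, e, f).
Definition sh4 (m : E5) : E5 := let: (a, b, c, e, f) := m in (a, b, c, e.+1, f).
Definition sh5 (m : E5) : E5 := let: (a, b, c, e, f) := m in (a, b, c, e, f.+1).

Definition Sv (L : seq (C * E5)) x1 x2 x3 x4 x5 :=
  \sum_(z <- L) z.1 * mono z.2 x1 x2 x3 x4 x5.

Lemma Sv_cat L1 L2 x1 x2 x3 x4 x5 :
  Sv (L1 ++ L2) x1 x2 x3 x4 x5 = Sv L1 x1 x2 x3 x4 x5 + Sv L2 x1 x2 x3 x4 x5.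
Proof. by rewrite /Sv big_cat. Qed.

Lemma Sv_sh (s : E5 -> E5) (L : seq (C * E5)) x1 x2 x3 x4 x5 y :
  (forall m, mono (s m) x1 x2 x3 x4 x5 = mono m x1 x2 x3 x4 x5 * y) ->
  Sv [seq (z.1, s z.2) | z <- L] x1 x2 x3 x4 x5 = Sv L x1 x2 x3 x4 x5 * y.
Proof.
move=> hs; rewrite /Sv big_map mulr_suml; apply: eq_bigr => z _.
by rewrite /= hs mulrA.
Qed.

Lemma mono_sh1 m x1 x2 x3 x4 x5 : mono (sh1 m) x1 x2 x3 x4 x5 = mono m x1 x2 x3 x4 x5 * x1.
Proof. case: m => [[[[a b] c] e] f] /=; rewrite exprS; ring. Qed.
Lemma mono_sh2 m x1 x2 x3 x4 x5 : mono (sh2 m) x1 x2 x3 x4 x5 = mono m x1 x2 x3 x4 x5 * x2.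
Proof. case: m => [[[[a b] c] e] f] /=; rewrite exprS; ring. Qed.
Lemma mono_sh3 m x1 x2 x3 x4 x5 : mono (sh3 m) x1 x2 x3 x4 x5 = mono m x1 x2 x3 x4 x5 * x3.
Proof. case: m => [[[[a b] c] e] f] /=; rewrite exprS; ring. Qed.
Lemma mono_sh4 m x1 x2 x3 x4 x5 : mono (sh4 m) x1 x2 x3 x4 x5 = mono m x1 x2 x3 x4 x5 * x4.
Proof. case: m => [[[[a b] c] e] f] /=; rewrite exprS; ring. Qed.
Lemma mono_sh5 m x1 x2 x3 x4 x5 : mono (sh5 m) x1 x2 x3 x4 x5 = mono m x1 x2 x3 x4 x5 * x5.
Proof. case: m => [[[[a b] c] e] f] /=; rewrite exprS; ring. Qed.

Lemma rep1 (p : Q1 C) : exists L, forall x1 x2 x3 x4 x5, qe1 p x1 = Sv L x1 x2 x3 x4 x5.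
Proof.
elim/poly_ind: p => [|q c [L IH]]; first by exists [::] => *; rewrite /Sv big_nil qe10.
exists ([seq (z.1, sh1 z.2) | z <- L] ++ [:: (c, (0, 0, 0, 0, 0)%N)]) => x1 x2 x3 x4 x5.
rewrite Sv_cat (Sv_sh _ (fun m => mono_sh1 m x1 x2 x3 x4 x5)) -IH /Sv big_cons big_nil /=.
by rewrite /qe1 hornerMXaddC !expr0 !mulr1 addr0.
Qed.

Lemma rep2 (p : Q2 C) : exists L, forall x1 x2 x3 x4 x5, qe2 p x1 x2 = Sv L x1 x2 x3 x4 x5.
Proof.
elim/poly_ind: p => [|q c [L IH]]; first by exists [::] => *; rewrite /Sv big_nil qe20.
have [Lc hc] := rep1 c.
exists ([seq (z.1, sh2 z.2) | z <- L] ++ Lc) => x1 x2 x3 x4 x5.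
rewrite Sv_cat (Sv_sh _ (fun m => mono_sh2 m x1 x2 x3 x4 x5)) -IH -hc.
by rewrite /qe2 hornerMXaddC qe1D qe1M qe1l.
Qed.

Lemma rep3 (p : Q3 C) : exists L, forall x1 x2 x3 x4 x5, qe3 p x1 x2 x3 = Sv L x1 x2 x3 x4 x5.
Proof.
elim/poly_ind: p => [|q c [L IH]]; first by exists [::] => *; rewrite /Sv big_nil qe30.
have [Lc hc] := rep2 c.
exists ([seq (z.1, sh3 z.2) | z <- L] ++ Lc) => x1 x2 x3 x4 x5.
rewrite Sv_cat (Sv_sh _ (fun m => mono_sh3 m x1 x2 x3 x4 x5)) -IH -hc.
by rewrite /qe3 hornerMXaddC qe2D qe2M qe2l.
Qed.

Lemma rep4 (p : Q4 C) : exists L, forall x1 x2 x3 x4 x5, qe4 p x1 x2 x3 x4 = Sv L x1 x2 x3 x4 x5.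
Proof.
elim/poly_ind: p => [|q c [L IH]]; first by exists [::] => *; rewrite /Sv big_nil qe40.
have [Lc hc] := rep3 c.
exists ([seq (z.1, sh4 z.2) | z <- L] ++ Lc) => x1 x2 x3 x4 x5.
rewrite Sv_cat (Sv_sh _ (fun m => mono_sh4 m x1 x2 x3 x4 x5)) -IH -hc.
by rewrite /qe4 hornerMXaddC qe3D qe3M qe3l.
Qed.

Lemma rep5 (p : Q5 C) : exists L, forall x1 x2 x3 x4 x5, qe5 p x1 x2 x3 x4 x5 = Sv L x1 x2 x3 x4 x5.
Proof.
elim/poly_ind: p => [|q c [L IH]]; first by exists [::] => *; rewrite /Sv big_nil qe50.
have [Lc hc] := rep4 c.
exists ([seq (z.1, sh5 z.2) | z <- L] ++ Lc) => x1 x2 x3 x4 x5.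
rewrite Sv_cat (Sv_sh _ (fun m => mono_sh5 m x1 x2 x3 x4 x5)) -IH -hc.
by rewrite /qe5 hornerMXaddC qe4D qe4M qe4l.
Qed.

Definition mon5 (m : E5) : Q5 C :=
  let: (a, b, c, e, f) := m in
  (((((('X^a : Q1 C)%:P * 'X^b : Q2 C)%:P * 'X^c : Q3 C)%:P * 'X^e : Q4 C)%:P * 'X^f : Q5 C)).

Definition co5 (p : Q5 C) (m : E5) : C :=
  let: (a, b, c, e, f) := m in p`_f`_e`_c`_b`_a.

Lemma qe11 a1 : qe1 (1 : Q1 C) a1 = 1.
Proof. by rewrite /qe1 hornerC. Qed.
Lemma qe21 a1 a2 : qe2 (1 : Q2 C) a1 a2 = 1.
Proof. by rewrite /qe2 hornerC qe11. Qed.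
Lemma qe31 a1 a2 a3 : qe3 (1 : Q3 C) a1 a2 a3 = 1.
Proof. by rewrite /qe3 hornerC qe21. Qed.
Lemma qe41 a1 a2 a3 a4 : qe4 (1 : Q4 C) a1 a2 a3 a4 = 1.
Proof. by rewrite /qe4 hornerC qe31. Qed.
Lemma qe1X (p : Q1 C) n a1 : qe1 (p ^+ n) a1 = qe1 p a1 ^+ n.
Proof. by elim: n => [|n IH]; rewrite ?expr0 ?qe11 // !exprS qe1M IH. Qed.
Lemma qe2X (p : Q2 C) n a1 a2 : qe2 (p ^+ n) a1 a2 = qe2 p a1 a2 ^+ n.
Proof. by elim: n => [|n IH]; rewrite ?expr0 ?qe21 // !exprS qe2M IH. Qed.
Lemma qe3X (p : Q3 C) n a1 a2 a3 : qe3 (p ^+ n) a1 a2 a3 = qe3 p a1 a2 a3 ^+ n.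
Proof. by elim: n => [|n IH]; rewrite ?expr0 ?qe31 // !exprS qe3M IH. Qed.
Lemma qe4X (p : Q4 C) n a1 a2 a3 a4 : qe4 (p ^+ n) a1 a2 a3 a4 = qe4 p a1 a2 a3 a4 ^+ n.
Proof. by elim: n => [|n IH]; rewrite ?expr0 ?qe41 // !exprS qe4M IH. Qed.

Lemma qe5_mon5 m x1 x2 x3 x4 x5 : qe5 (mon5 m) x1 x2 x3 x4 x5 = mono m x1 x2 x3 x4 x5.
Proof.
case: m => [[[[a b] c] e] f] /=.
rewrite /qe5 hornerM hornerC hornerXn qe4M qe4X qe4l.
rewrite /qe4 hornerM hornerC hornerXn qe3M qe3X qe3l.
rewrite /qe3 hornerM hornerC hornerXn qe2M qe2X qe2l.
rewrite /qe2 hornerM hornerC hornerXn qe1M !qe1X qe1l.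
by rewrite {1}/qe1 hornerX.
Qed.

Lemma coefCX (R : nzSemiRingType) (u : R) n k : (u%:P * 'X^n)`_k = u *+ (k == n).
Proof. by rewrite coefCM coefXn mulr_natr. Qed.

Lemma co5_mon5 m m' : co5 (mon5 m) m' = (m == m')%:R.
Proof.
case: m => [[[[a b] c] e] f]; case: m' => [[[[a' b'] c'] e'] f'] /=.
rewrite !(coefCX, coefMn, coefXn) -!mulrnA.
rewrite -[((a,b,c,e,f) == _)%:R]/(1 *+ ((a,b,c,e,f) == (a',b',c',e',f'))); congr (_ *+ _).
rewrite !xpair_eqE (eq_sym a) (eq_sym b) (eq_sym c) (eq_sym e) (eq_sym f).
by case: (a' == a); case: (b' == b); case: (c' == c); case: (e' == e); case: (f' == f).
Qed.

Lemma co5_l5M x (p : Q5 C) m : co5 (l5 x * p) m = x * co5 p m.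
Proof.
case: m => [[[[a b] c] e] f] /=.
by rewrite /l5 coefCM /l4 coefCM /l3 coefCM /l2 coefCM /l1 coefCM.
Qed.

Lemma co5_sum I (r : seq I) (F : I -> Q5 C) m :
  co5 (\sum_(i <- r) F i) m = \sum_(i <- r) co5 (F i) m.
Proof.
case: m => [[[[a b] c] e] f] /=.
by rewrite !coef_sum.
Qed.

Lemma co5_0 m : co5 0 m = 0.
Proof. by case: m => [[[[a b] c] e] f] /=; rewrite !coef0. Qed.
End Rep.

Require Import Defs.
From HB Require Import structures.
From mathcomp Require Import all_boot all_order all_algebra.
From mathcomp Require Import ring zify.
Import Order.TTheory GRing.Theory Num.Theory.
Local Open Scope ring_scope.
Set Implicit Arguments. Unset Strict Implicit.
Strategy expand [reverse_coercion].

Section Dim.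
Variable C : numClosedFieldType.
Implicit Types M : 'M[C]_3.

Definition m5 (m : E5) M := mono m (I1 M) (I2 M) (I3 M) (I4 M) (I5 M).
Definition mm (m : E) M := m5 m.1 M * I6 M ^+ m.2.

Lemma I1Z t M : I1 (t *: M) = t * I1 M.
Proof. rewrite /I1 /ch0 !mxE; ring. Qed.
Lemma I2Z t M : I2 (t *: M) = t ^+ 2 * I2 M.
Proof. rewrite /I2 /ch1 /cx1 /cy1 !mxE; ring. Qed.
Lemma I3Z t M : I3 (t *: M) = t ^+ 2 * I3 M.
Proof. rewrite /I3 /cx2 /cy2 /cx3 /cy3 !mxE; ring. Qed.
Lemma I4Z t M : I4 (t *: M) = t ^+ 3 * I4 M.
Proof. rewrite /I4 /ch1 /cx1 /cy1 /cx2 /cy2 /cx3 /cy3 !mxE; ring. Qed.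
Lemma I5Z t M : I5 (t *: M) = t ^+ 3 * I5 M.
Proof. rewrite /I5 /ch1 /cx1 /cy1 /cx2 /cy2 /cx3 /cy3 !mxE; ring. Qed.
Lemma I6Z t M : I6 (t *: M) = t ^+ 3 * I6 M.
Proof. rewrite /I6 /ch1 /cx1 /cy1 /cx2 /cy2 /cx3 /cy3 !mxE; ring. Qed.

Lemma mm_hom (m : E) t M : mm m (t *: M) = t ^+ (w m) * mm m M.
Proof.
case: m => [[[[[a b] c] e] f] g].
rewrite /mm /m5 /mono /w /w5 /= I1Z I2Z I3Z I4Z I5Z I6Z !exprMn !mulSn ?mul1n ?muln0 !exprD ?addn0 ?expr0.
ring.
Qed.

Lemma repR (F : 'M[C]_3 -> C) : inR F ->
  exists L : seq (C * E), forall M, \tr M = 0 -> F M = \sum_(z <- L) z.1 * mm z.2 M.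
Proof.
move=> [p hp]; have [a [b hab]] := iiiaP p.
have [La ha] := rep5 (a : Q5 C); have [Lb hb] := rep5 (b : Q5 C).
exists ([seq (z.1, (z.2, false)) | z <- La] ++ [seq (z.1, (z.2, true)) | z <- Lb]).
move=> M tM; rewrite hp // hab // /evI5 !br5 ha hb /Sv big_cat !big_map /= mulr_sumr.
congr (_ + _); apply: eq_bigr => z _; rewrite /mm /m5 /=; ring.
Qed.

Lemma extract d (F : 'M[C]_3 -> C) (L : seq (C * E)) :
  (forall M, \tr M = 0 -> F M = \sum_(z <- L) z.1 * mm z.2 M) ->
  (forall t M, \tr M = 0 -> F (t *: M) = t ^+ d * F M) ->
  forall M, \tr M = 0 -> F M = \sum_(z <- L) z.1 * mm z.2 M * (w z.2 == d)%:R.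
Proof.
move=> hL hH M tM.
pose Q : {poly C} := \sum_(z <- L) (z.1 * mm z.2 M) *: 'X^(w z.2) - (F M) *: 'X^d.
have Q0 : Q = 0.
  apply: (@pz C C id) => // t.
  have tt : \tr (t *: M) = 0 by rewrite mxtraceZ tM mulr0.
  rewrite /Q hornerD hornerN hornerZ hornerXn horner_sum.
  apply/eqP; rewrite subr_eq0; apply/eqP.
  rewrite [F M * _]mulrC -(hH t M tM) (hL _ tt); apply: eq_bigr => z _.
  by rewrite hornerZ hornerXn mm_hom; ring.
have := congr1 (fun q : {poly C} => q`_d) Q0.
rewrite /= /Q coefB coefZ coefXn eqxx mulr1 coef_sum coef0 => /eqP.
rewrite subr_eq0 => /eqP <-; apply: eq_bigr => z _.
by rewrite coefZ coefXn (eq_sym d).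
Qed.

Definition e0 : E := ((0, 0, 0, 0, 0)%N, false).

Lemma collapse (s : seq E) (us : uniq s) (x : E) (G : E -> C) :
  \sum_(j < size s) (x == nth e0 s j)%:R * G (nth e0 s j) = (x \in s)%:R * G x.
Proof.
case: (boolP (x \in s)) => xs.
  have ks : (index x s < size s)%N by rewrite index_mem.
  rewrite (bigD1 (Ordinal ks)) //= nth_index // eqxx mul1r big1 ?addr0 //.
  move=> j /eqP nj; case: eqP => [ej|]; last by rewrite mul0r.
  by case: nj; apply: val_inj => /=; rewrite ej index_uniq.
rewrite mul0r big1 // => j _; case: eqP => [ej|]; last by rewrite mul0r.
by case/negP: xs; rewrite ej mem_nth.
Qed.

Lemma collapse2 (s : seq E) (us : uniq s) (c : 'I_(size s) -> C) (i : 'I_(size s)) :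
  \sum_(j < size s) c j * (nth e0 s j == nth e0 s i)%:R = c i.
Proof.
rewrite (bigD1 i) //= eqxx mulr1 big1 ?addr0 // => j nj.
rewrite nth_uniq //; have -> : ((j : nat) == i) = false by apply/negbTE.
by rewrite mulr0.
Qed.

Definition mon6 (m : E) : P6 C := ((mon5 C m.1 : Q5 C) : P5 C)%:P * 'X^(m.2).

Lemma mm_ev6 m M : mm m M = evI6 (mon6 m) M.
Proof.
have G := good6 (I1 M) (I2 M) (I3 M) (I4 M) (I5 M) (I6 M); have [g0 g1 gD gM] := G.
rewrite /evI6 /mon6 gM ev6C (good_exp 'X _ G) ev6X br5 qe5_mon5.
by [].
Qed.
End Dim.

Require Import Defs.
From HB Require Import structures.
From mathcomp Require Import all_boot all_order all_algebra.
From mathcomp Require Import ring zify.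
Import Order.TTheory GRing.Theory Num.Theory.
Local Open Scope ring_scope.
Set Implicit Arguments. Unset Strict Implicit.
Strategy expand [reverse_coercion].

Section Dim2.
Variable C : numClosedFieldType.
Implicit Types M : 'M[C]_3.

Lemma mm_inRd (m : E) : inRd (w m) (mm (C:=C) m).
Proof.
split; first by exists (mon6 C m) => M _; exact: mm_ev6.
by move=> t M _; rewrite mm_hom.
Qed.

Lemma qe5_lsum (n : nat) (c : 'I_n -> C) (mu : 'I_n -> E5) a1 a2 a3 a4 a5 :
  qe5 (\sum_(i < n) l5 (c i) * mon5 C (mu i)) a1 a2 a3 a4 a5 =
  \sum_(i < n) c i * mono (mu i) a1 a2 a3 a4 a5.
Proof.
Time rewrite qe5_sum; apply: eq_bigr => i _.
Time by rewrite qe5M qe5l qe5_mon5.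
Qed.

Lemma indep_gen (s : seq E) (us : uniq s) :
  lin_indep (fun i : 'I_(size s) => mm (C:=C) (nth e0 s i)).
Proof.
move=> c hc.
have [AB defAB] : exists AB : bool -> Q5 C, forall g0, AB g0 =
  \sum_(i < size s) l5 (c i * ((nth e0 s i).2 == g0)%:R) * mon5 C (nth e0 s i).1.
  by eexists => g0; reflexivity.
have hAB : forall M, \tr M = 0 -> eI5 (AB false) M + I6 M * eI5 (AB true) M = 0.
  move=> M tM.
  have eA : forall g0, eI5 (AB g0) M = \sum_(i < size s)
      (c i * ((nth e0 s i).2 == g0)%:R) * m5 (nth e0 s i).1 M.
    by move=> g0; rewrite defAB; exact: qe5_lsum.
  Time rewrite -[RHS](hc M tM) (eA false). Time rewrite (eA true). Time rewrite mulr_sumr -big_split.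
  apply: eq_bigr => i _; rewrite /mm /m5.
  by case: (nth e0 s i).2 => /=; ring.
have [hA hB] := split_unique hAB.
have A0 := indep hA; have B0 := I6_kill hB.
move=> i; have key : co5 (AB (nth e0 s i).2) (nth e0 s i).1 = c i.
  rewrite defAB co5_sum; under eq_bigr => j _ do rewrite co5_l5M co5_mon5.
  rewrite -[RHS](collapse2 us c i); apply: eq_bigr => j _.
  rewrite -mulrA -natrM; congr (_ * _%:R).
  case: (nth e0 s j) => [m1 g1]; case: (nth e0 s i) => [m2 g2] /=.
  by rewrite xpair_eqE andbC; case: (_ == _); case: (_ == _).
by rewrite -key; case: (nth e0 s i).2; rewrite ?A0 ?B0 co5_0.
Qed.

Lemma span_gen d (s : seq E) (us : uniq s) (ms : forall x, (x \in s) = (w x == d))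
  (f : 'I_(size s).+1 -> 'M[C]_3 -> C) :
  (forall i, inRd d (f i)) -> ~ lin_indep f.
Proof.
move=> hf hind.
have rep : forall i, exists v : 'I_(size s) -> C, forall M, \tr M = 0 ->
    f i M = \sum_(j < size s) v j * mm (nth e0 s j) M.
  move=> i; have [hR hH] := hf i; have [L hL] := repR hR.
  have hE := extract hL hH.
  exists (fun j => \sum_(z <- L) z.1 * (z.2 == nth e0 s j)%:R) => M tM.
  rewrite hE //.
  under [RHS]eq_bigr => j _ do rewrite mulr_suml.
  rewrite exchange_big /=; apply: eq_bigr => z _.
  under eq_bigr => j _ do rewrite -mulrA.
  rewrite -mulr_sumr (collapse us z.2 (fun y => mm (C:=C) y M)) ms -mulrA; congr (_ * _); rewrite mulrC //.
have [V hV] := fin_all_exists rep.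
pose A : 'M[C]_((size s).+1, size s) := \matrix_(i, j) V i j.
have rk : (\rank A <= size s)%N := rank_leq_col A.
have Kn0 : kermx A != 0.
  by rewrite -mxrank_eq0 mxrank_ker subn_eq0 -ltnNge ltnS.
have [k hk] : exists k, row k (kermx A) != 0.
  apply/existsP; move: Kn0; apply: contraR; rewrite negb_exists => /forallP hk.
  apply/eqP/row_matrixP => k; move/negPn/eqP: (hk k) => ->; by rewrite row0.
pose u := row k (kermx A).
have uA : u *m A = 0 by rewrite /u -row_mul mulmx_ker row0.
have := hind (fun i => u 0 i).
have H : forall M, \tr M = 0 -> \sum_(i < (size s).+1) u 0 i * f i M = 0.
  move=> M tM.
  under eq_bigr => i _ do rewrite (hV i M tM) mulr_sumr.
  rewrite exchange_big /=; apply: big1 => j _.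
  transitivity ((u *m A) 0 j * mm (C:=C) (nth e0 s j) M).
    rewrite [(u *m A) 0 j]mxE mulr_suml; apply: eq_bigr => i _.
    rewrite mulrA; congr (_ * _ * _); by rewrite /A mxE.
  by rewrite uA mxE mul0r.
move=> /(_ H) u0; case/negP: hk; apply/eqP/rowP => j.
by move: (u0 j); rewrite /u => ->; rewrite mxE.
Qed.

Lemma dimP d : dimRd C d (hh d).
Proof.
split; last first.
  apply: span_gen; first exact: uniq_mons.
  by move=> x; rewrite mem_mons.
exists (fun i : 'I_(hh d) => mm (C:=C) (nth e0 (mons d d) i)); split.
  move=> i; have := mm_inRd (nth e0 (mons d d) i).
  have := mem_nth e0 (ltn_ord i); rewrite mem_mons // => /eqP ->.
  by [].
exact/indep_gen/uniq_mons.
Qed.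
End Dim2.

Require Import Defs.
From HB Require Import structures.
From mathcomp Require Import all_boot all_order all_algebra.
Import Order.TTheory GRing.Theory Num.Theory.
Local Open Scope ring_scope.
Strategy expand [reverse_coercion].

Lemma br0 (C : numClosedFieldType) (p : P5 C) : (p : Q5 C) = 0 -> p = 0.
Proof. move=> h; exact_no_check h. Qed.

Theorem mainTheorem5 (C : numClosedFieldType) :
  (* (i) the syzygy *)
  (forall M : 'M[C]_3, \tr M = 0 ->
     I2 M * I3 M ^+ 2 - 4%:R * I4 M * I5 M - I6 M ^+ 2 = 0) /\
  (* (ii a) I1,...,I5 algebraically independent *)
  (forall p : P5 C, (forall M : 'M[C]_3, \tr M = 0 -> evI5 p M = 0) -> p = 0) /\
  (* (ii b) the relation generates the ideal of relations among I1,...,I6 *)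
  (forall p : P6 C, (forall M : 'M[C]_3, \tr M = 0 -> evI6 p M = 0) ->
     exists q : P6 C, p = q * Rel C) /\
  (* (iii) R = C[I1..I5] (+) I6 C[I1..I5] *)
  ((forall p : P6 C, exists a b : P5 C, forall M : 'M[C]_3, \tr M = 0 ->
       evI6 p M = evI5 a M + I6 M * evI5 b M) /\
   (forall a b : P5 C,
       (forall M : 'M[C]_3, \tr M = 0 -> evI5 a M + I6 M * evI5 b M = 0) ->
       (forall M : 'M[C]_3, \tr M = 0 -> evI5 a M = 0) /\
       (forall M : 'M[C]_3, \tr M = 0 -> I6 M * evI5 b M = 0))) /\
  (* (iv) Hilbert series: H(R,q) * HilbDen = HilbNum as formal power series *)
  (exists h : nat -> nat,
     (forall d, dimRd C d (h d)) /\
     forall n : nat,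
       \sum_(i < n.+1) (h i)%:Z * HilbDen`_(n - i) = HilbNum`_n).
Proof.
split; first by move=> M _; exact: syz.
split.
  move=> p h; apply: br0; apply: indep => M tM.
  by have := h M tM; rewrite /evI5 br5.
split; first exact: iibP.
split.
  split; first exact: iiiaP.
  move=> a b h.
  have h' : forall M : 'M[C]_3, \tr M = 0 -> eI5 (a : Q5 C) M + I6 M * eI5 (b : Q5 C) M = 0.
    by move=> M tM; have := h M tM; rewrite /evI5 !br5.
  have [h1 h2] := split_unique h'.
  by split => M tM; rewrite /evI5 br5; [exact: h1 | exact: h2].
exists hh; split; first exact: dimP.
exact: hilb.
Qed.
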